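(* Let $R$ be a ring, $\mathfrak{M}$ a formation of $R$-modules, $G$ a group and $A$ an $RG$-module. Then $\mathbf{Coc}_{\mathfrak{M}}(G) = \{x \in G \mid A/C_A(x) \in \mathfrak{M}\}$ is a normal subgroup of $G$.
   Context: A class $\mathfrak{M}$ of $R$-modules (closed under isomorphism) is a formation if: (F1) whenever $A \in \mathfrak{M}$ and $B$ is an $R$-submodule of $A$, $A/B \in \mathfrak{M}$; (F2) whenever $A$ is an $R$-module and $B_1,\dots,B_k$ are submodules with $A/B_j \in \mathfrak{M}$ for all $j$, then $A/(B_1\cap\dots\cap B_k) \in \mathfrak{M}$. For $x \in G$, $C_A(x) = \{a\in A \mid ax = a\}$. *)

(* Defs.v *)
From HB Require Import structures.
From mathcomp Require Import all_boot all_order all_algebra.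
Set Implicit Arguments. Unset Strict Implicit. Unset Printing Implicit Defensive.
Import GRing.Theory.
Local Open Scope ring_scope.

Definition modclass (R : pzRingType) := lmodType R -> Prop.

Definition submodule (R : pzRingType) (V : lmodType R) (B : V -> Prop) : Prop :=
  [/\ B 0, (forall a b, B a -> B b -> B (a + b)) & (forall (r : R) a, B a -> B (r *: a))].

Definition mod_iso (R : pzRingType) (V W : lmodType R) : Prop :=
  exists f : {linear V -> W}, bijective f.

(* The quotient module V/B belongs to the class M (up to isomorphism):
   V/B is realized as any module Q with a surjective R-linear map V -> Q
   whose kernel is exactly B. *)
Definition quot_in (R : pzRingType) (M : modclass R) (V : lmodType R)
    (B : V -> Prop) : Prop :=
  exists (Q : lmodType R) (f : {linear V -> Q}),
    [/\ (forall q : Q, exists v, f v = q), (forall v, f v = 0 <-> B v) & M Q].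

Definition formation (R : pzRingType) (M : modclass R) : Prop :=
  [/\ (forall V W : lmodType R, mod_iso V W -> M V -> M W),
      (* F1 *)
      (forall (V : lmodType R) (B : V -> Prop), M V -> submodule B -> quot_in M B)
    & (* F2 *)
      (forall (V : lmodType R) (k : nat) (B : 'I_k -> V -> Prop),
         (forall j, submodule (B j)) -> (forall j, quot_in M (B j)) ->
         quot_in M (fun v => forall j, B j v))].

Definition RG_action (R : pzRingType) (G : groupType) (A : lmodType R)
    (act : A -> G -> A) : Prop :=
  [/\ (forall x a b, act (a + b) x = act a x + act b x),
      (forall x (r : R) a, act (r *: a) x = r *: act a x),
      (forall a, act a 1%g = a)
    & (forall a x y, act (act a x) y = act a (x * y)%g)].

Definition centA (R : pzRingType) (G : groupType) (A : lmodType R)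
    (act : A -> G -> A) (x : G) : A -> Prop := fun a => act a x = a.

Definition Coc (R : pzRingType) (M : modclass R) (G : groupType) (A : lmodType R)
    (act : A -> G -> A) : G -> Prop := fun x => quot_in M (centA act x).

Definition normal_subgroup (G : groupType) (H : G -> Prop) : Prop :=
  [/\ H 1%g, (forall x y, H x -> H y -> H (x * y)%g),
      (forall x, H x -> H (x^-1)%g)
    & (forall x g, H x -> H (x ^ g)%g)].

(* Main.v *)
Require Import Defs.
From HB Require Import structures.
From mathcomp Require Import all_boot all_order all_algebra.
Set Implicit Arguments. Unset Strict Implicit.
Import GRing.Theory.
Local Open Scope ring_scope.

Lemma quot_ext (R : pzRingType) (M : modclass R) (V : lmodType R) (B B' : V -> Prop) :
  (forall v, B v <-> B' v) -> quot_in M B -> quot_in M B'.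
Proof.
move=> e [Q [f [sf kf MQ]]]; exists Q, f; split=> // v.
by split=> [/kf/e|/e/kf].
Qed.

Lemma quot_comp (R : pzRingType) (M : modclass R) (V W : lmodType R)
  (h : {linear V -> W}) (B : W -> Prop) :
  (forall w, exists v, h v = w) -> quot_in M B -> quot_in M (fun v => B (h v)).
Proof.
move=> sh [Q [f [sf kf MQ]]]; exists Q, (f \o h)%FUN; split=> //.
  move=> q; have [w <-] := sf q; have [v <-] := sh w; by exists v.
by move=> v; exact: kf.
Qed.

Lemma quot_mono (R : pzRingType) (M : modclass R) (V : lmodType R) (B1 B2 : V -> Prop) :
  formation M -> submodule B2 -> (forall v, B1 v -> B2 v) ->
  quot_in M B1 -> quot_in M B2.
Proof.
move=> [_ F1 _] [B0 BD BZ] sub [Q [f [sf kf MQ]]].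
pose C := fun q : Q => exists v, f v = q /\ B2 v.
have sC : submodule C.
  split.
  - by exists 0; rewrite linear0.
  - move=> _ _ [a [<- Ba]] [b [<- Bb]]; exists (a + b); rewrite linearD; split=> //.
    exact: BD.
  - move=> r _ [a [<- Ba]]; exists (r *: a); rewrite linearZ; split=> //; exact: BZ.
have := F1 Q C MQ sC => /(@quot_comp _ _ _ _ f _ sf); apply: quot_ext => v; split.
  move=> [w [e Bw]].
  have : B1 (v - w) by apply/kf; rewrite linearB e subrr.
  move=> /sub Bvw.
  have -> : v = (v - w) + w by rewrite subrK.
  exact: BD.
by move=> Bv; exists v.
Qed.

Section Conj.
Variables (R : pzRingType) (G : groupType) (A : lmodType R) (act : A -> G -> A).
Hypothesis hact : RG_action act.
Variable g : G.
Definition actg (a : A) := act a g.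
Lemma actg_lin : linear actg.
Proof.
case: hact => hD hZ _ _ r a b; by rewrite /actg hD hZ.
Qed.
HB.instance Definition _ := GRing.isLinear.Build R A A _ actg actg_lin.
End Conj.

Theorem lemma2p2 (R : pzRingType) (M : modclass R) (G : groupType)
    (A : lmodType R) (act : A -> G -> A) :
  formation M -> RG_action act -> normal_subgroup (Coc M act).
Proof.
move=> hM hact; have [isoM F1 F2] := hM; have [hD hZ h1 hM2] := hact.
have act0 : forall x, act 0 x = 0.
  move=> x; have e := hD x 0 0; rewrite addr0 in e.
  by apply: (addrI (act 0 x)); rewrite -e addr0.
have actN : forall x a, act (- a) x = - act a x.
  by move=> x a; apply/eqP; rewrite -subr_eq0 opprK -hD addNr act0.
have subC : forall x, submodule (centA act x).
  move=> x; split; rewrite /centA.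
  - exact: act0.
  - by move=> a b Ha Hb; rewrite hD Ha Hb.
  - by move=> r a Ha; rewrite hZ Ha.
have inv : forall x a, centA act x a -> centA act (x^-1)%g a.
  by move=> x a; rewrite /centA => Ha; rewrite -{1}Ha hM2 mulgV h1.
split.
- have := F2 A 0%N (fun _ _ => True) (fun j => match j with Ordinal _ p => False_ind _ (notF p) end)
               (fun j => match j with Ordinal _ p => False_ind _ (notF p) end).
  by apply: quot_ext => v; split=> [_|_ [] //]; rewrite /centA h1.
- move=> x y Hx Hy.
  pose B := fun j : 'I_2 => if val j == 0%N then centA act x else centA act y.
  have := F2 A 2 B (fun j => ltac:(rewrite /B; case: ifP => _; exact: subC))
     (fun j => ltac:(rewrite /B; case: ifP => _; assumption)).
  apply: quot_mono => //.
  move=> v Hv; have Hvx := Hv ord0; have Hvy := Hv (Ordinal (isT : (1 < 2)%N)).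
  rewrite /B /= in Hvx Hvy; by rewrite /centA -hM2 Hvx Hvy.
- move=> x Hx; apply: quot_ext Hx => a; split; first exact: inv.
  by move=> /inv; rewrite invgK.
- move=> x g Hx.
  have sh : forall w, exists v, actg act (g^-1)%g v = w.
    by move=> w; exists (act w g); rewrite /actg hM2 mulgV h1.
  have := @quot_comp _ _ _ _ (actg act (g^-1)%g) _ sh Hx.
  move=> /(_ hact) Hc; apply: (quot_ext _ Hc) => a /=; rewrite /centA /actg /= !hM2 conjgE; split.
    by move=> e; rewrite mulgA -hM2 e hM2 mulVg h1.
  by move=> e; rewrite -{2}e hM2 mulgA mulgK.
Qed.
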